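(* Let $L$ be a linear forest with $k$ vertices and let $n$ be a positive integer. If $G$ and $G'$ are $n$-vertex graphs all of whose components are cycles with at least $k+1$ vertices, then $s(G,L)=s(G',L)$; that is, the number of induced copies of $L$ depends only on $L$ and $n$.
   Context: A linear forest is a disjoint union of paths. For graphs $G$ and $H$, $s(G,H)$ is the number of vertex subsets $X\subseteq V(G)$ such that $G[X]$ is isomorphic to $H$. *)

(* Defs.v *)
From mathcomp Require Import all_boot.
Set Implicit Arguments. Unset Strict Implicit. Unset Printing Implicit Defensive.

Definition simple_graph (V : finType) (e : rel V) : Prop :=
  symmetric e /\ irreflexive e.

Definition component (V : finType) (e : rel V) (x : V) : {set V} :=
  [set y | connect e x y].

Definition induced_iso (V W : finType) (eG : rel V) (X : {set V}) (eH : rel W)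
  : bool :=
  [exists f : {ffun W -> V},
     [&& injectiveb f, f @: [set: W] == X &
         [forall u, forall v, eG (f u) (f v) == eH u v]]].

Definition s_count (V W : finType) (eG : rel V) (eH : rel W) : nat :=
  #|[set X : {set V} | induced_iso eG X eH]|.

Definition linear_forest (W : finType) (e : rel W) : Prop :=
  forall x : W, exists m (f : 'I_m -> W),
    injective f /\ f @: [set: 'I_m] = component e x /\
    forall i j : 'I_m, e (f i) (f j) = (i.+1 == j :> nat) || (j.+1 == i :> nat).

Definition cycle_components_atleast (V : finType) (e : rel V) (c : nat) : Prop :=
  forall x : V, exists m (f : 'I_m -> V),
    3 <= m /\ c <= m /\
    injective f /\ f @: [set: 'I_m] = component e x /\
    forall i j : 'I_m,
      e (f i) (f j) = (j == i.+1 %% m :> nat) || (i == j.+1 %% m :> nat).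

(* Main.v *)
Require Import Defs.
Set Warnings "-notation-overridden,-ambiguous-paths".
From mathcomp Require Import all_boot all_order all_algebra zify.
Set Implicit Arguments. Unset Strict Implicit. Unset Printing Implicit Defensive.
Import Order.TTheory GRing.Theory Num.Theory.

Section Shift.
Variables (V : finType) (sg tg : V -> V).
Hypothesis sgK : cancel sg tg.
Hypothesis tgK : cancel tg sg.

Definition sh (d : int) (v : V) : V :=
  match d with Posz n => iter n sg v | Negz n => iter n.+1 tg v end.

Lemma sh0 v : sh 0 v = v. Proof. by []. Qed.

Lemma shS d v : sh (d + 1)%R v = sg (sh d v).
Proof.
case: d => [n|n]; first by rewrite /= addn1.
case: n => [|n].
  have -> : (Negz 0 + 1 = 0)%R by [].
  by rewrite /= tgK.
have -> : (Negz n.+1 + 1 = Negz n)%R by rewrite !NegzE; lia.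
by rewrite /= tgK.
Qed.

Lemma shP d v : sh (d - 1)%R v = tg (sh d v).
Proof.
apply: (can_inj sgK); rewrite tgK -shS.
by rewrite subrK.
Qed.

Lemma shD a b v : sh (a + b)%R v = sh a (sh b v).
Proof.
case: a => n.
  elim: n => [|n IH]; first by rewrite add0r.
  have -> : Posz n.+1 = (Posz n + 1)%R by lia.
  by rewrite addrAC shS IH -shS.
elim: n => [|n IH].
  have -> : Negz 0 = (0 - 1)%R by [].
  by rewrite addrAC !shP add0r.
have -> : Negz n.+1 = (Negz n - 1)%R by rewrite !NegzE; lia.
by rewrite addrAC !shP IH.
Qed.

Lemma shK d v : sh (- d)%R (sh d v) = v.
Proof. by rewrite -shD addNr. Qed.

Lemma shKV d v : sh d (sh (- d)%R v) = v.
Proof. by rewrite -shD addrN. Qed.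

Lemma sh_inj d : injective (sh d).
Proof. exact: (can_inj (shK d)). Qed.

Variable K : nat.
Hypothesis orb : forall v t, 0 < t <= K -> iter t sg v != v.

Lemma sh_fix d v : (- (K%:Z) <= d <= K%:Z)%R -> (sh d v == v) = (d == 0%R).
Proof.
move=> Hd; case: d Hd => n Hd.
  case: n Hd => [|n] Hd; first by rewrite /= eqxx.
  have H := orb v (t:=n.+1).
  rewrite /sh (negbTE (H _)) //; lia.
apply/negbTE; apply/eqP => E.
have : iter n.+1 sg (iter n.+1 tg v) = v.
  elim: n.+1 {E} => // m IH; by rewrite iterSr iterS tgK.
have E' : iter n.+1 tg v = v := E.
rewrite E' => E2; move: (orb v (t:=n.+1)); rewrite E2 eqxx => /(_ _)/negP; apply.
all: rewrite NegzE in Hd; lia.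
Qed.

Lemma sh_eq d d' v : (- (K%:Z) <= d - d' <= K%:Z)%R -> (sh d v == sh d' v) = (d == d').
Proof.
move=> H.
rewrite -(inj_eq (@sh_inj (- d')%R)) shK -shD -subr_eq0 -(sh_fix v H).
by rewrite addrC.
Qed.

End Shift.

Section Count.
Variable V : finType.

Fixpoint Sc (c : nat) (g : seq V -> nat) : nat :=
  if c is c'.+1 then \sum_(v : V) Sc c' (fun s => g (v :: s)) else g [::].

Lemma Sc_ext c g h : (forall s, g s = h s) -> Sc c g = Sc c h.
Proof.
elim: c g h => [|c IH] g h E /=; first exact: E.
by apply: eq_bigr => v _; apply: IH => s.
Qed.

Lemma Sc_add c g h : Sc c (fun s => g s + h s) = Sc c g + Sc c h.
Proof.
elim: c g h => [|c IH] g h //=.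
rewrite -big_split /=; apply: eq_bigr => v _; exact: IH.
Qed.

Lemma Sc_sum (I : Type) (r : seq I) c (g : I -> seq V -> nat) :
  Sc c (fun s => \sum_(i <- r) g i s) = \sum_(i <- r) Sc c (g i).
Proof.
elim: c g => [|c IH] g //=.
under eq_bigr => v _ do rewrite (IH (fun i s => g i (v :: s))).
by rewrite exchange_big.
Qed.

Lemma Sc0 c : Sc c (fun _ => 0) = 0.
Proof. elim: c => [|c IH] //=; by rewrite big1. Qed.

Lemma Sc_behead c g : Sc c.+1 (fun s => g (behead s)) = #|V| * Sc c g.
Proof. by rewrite /= sum_nat_const. Qed.

Lemma Sc_elim c j (f : V -> V) (x0 : V) (P : seq V -> bool) :
  Sc c.+1 (fun s => P s && (head x0 s == f (nth x0 s j.+1))) =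
  Sc c (fun s => P (f (nth x0 s j) :: s)).
Proof.
rewrite /=.
have -> : \sum_(v : V) Sc c (fun s => P (v :: s) && (v == f (nth x0 s j))) =
   Sc c (fun s => \sum_(v : V) (P (v :: s) && (v == f (nth x0 s j)) : nat)).
  by rewrite Sc_sum.
apply: Sc_ext => s.
rewrite (bigD1 (f (nth x0 s j))) //= eqxx andbT big1 ?addn0 //.
by move=> v /negbTE ->; rewrite andbF.
Qed.

End Count.

Definition cstr := (nat * nat * seq int * bool)%type.
Definition ca (x : cstr) := x.1.1.1.
Definition cb (x : cstr) := x.1.1.2.
Definition cD (x : cstr) := x.1.2.
Definition cp (x : cstr) := x.2.

Definition flipc (x : cstr) : cstr := (cb x, ca x, map (fun e => - e)%R (cD x), cp x).
Definition idxj (jj a : nat) := if a == 0 then jj else a.-1.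
Definition substc (jj : nat) (d : int) (x : cstr) : cstr :=
  (idxj jj (ca x), idxj jj (cb x),
   map (fun e => e - (if ca x == 0 then d else 0) + (if cb x == 0 then d else 0))%R (cD x),
   cp x).
Definition shiftc (x : cstr) : cstr := ((ca x).-1, (cb x).-1, cD x, cp x).
Definition meas (cs : seq cstr) := sumn [seq (size (cD x)).+1 | x <- cs].

Section Sat.
Variables (V : finType) (sg tg : V -> V) (x0 : V).
Hypothesis sgK : cancel sg tg.
Hypothesis tgK : cancel tg sg.
Variable K : nat.
Hypothesis orb : forall v t, 0 < t <= K -> iter t sg v != v.

Local Notation sh := (sh sg tg).

Definition sat1 (s : seq V) (x : cstr) : bool :=
  (nth x0 s (ca x) \in [seq sh d (nth x0 s (cb x)) | d <- cD x]) == cp x.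
Definition sat (s : seq V) (cs : seq cstr) := all (sat1 s) cs.

Lemma mem_sh_map (u w : V) da db (D : seq int) :
  (sh da u \in [seq sh e (sh db w) | e <- D]) =
  (u \in [seq sh (e - da + db)%R w | e <- D]).
Proof.
have -> : [seq sh e (sh db w) | e <- D] = map (sh da) [seq sh (e - da + db)%R w | e <- D].
  rewrite -map_comp; apply: eq_map => e /=.
  by rewrite -!(shD sgK tgK) addrCA addrA subrK.
by rewrite mem_map //; apply: sh_inj.
Qed.

Lemma sat1_flip s x : sat1 s (flipc x) = sat1 s x.
Proof.
rewrite /sat1 /flipc /ca /cb /cD /cp /=.
congr (_ == _).
apply/mapP/mapP => -[e].
  move=> /mapP [e' He' ->] E; exists e' => //.
  by rewrite E (shKV sgK tgK).
move=> He E; exists (- e)%R; first by apply/mapP; exists e.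
by rewrite E (shK sgK tgK).
Qed.

Lemma sat1_self s x : ca x = cb x ->
  (forall e, e \in cD x -> (- (K%:Z) <= e <= K%:Z)%R) ->
  sat1 s x = ((0%R \in cD x) == cp x).
Proof.
move=> E HD; rewrite /sat1 E; congr (_ == _).
apply/mapP/idP => [[e He /esym /eqP]|H0].
  by rewrite (sh_fix tgK orb) ?HD // => /eqP <-.
by exists 0%R.
Qed.

Lemma sat1_subst s jj d x :
  sat1 (sh d (nth x0 s jj) :: s) x = sat1 s (substc jj d x).
Proof.
have Hn : forall a, nth x0 (sh d (nth x0 s jj) :: s) a =
     sh (if a == 0 then d else 0%R) (nth x0 s (idxj jj a)).
  by case=> [|a].
rewrite /sat1 /substc /ca /cb /cD /cp /= !Hn mem_sh_map.
by rewrite -map_comp.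
Qed.

Lemma sat1_shift s v x : ca x != 0 -> cb x != 0 -> sat1 (v :: s) x = sat1 s (shiftc x).
Proof.
rewrite /sat1 /shiftc /ca /cb /cD /cp /=.
by case: x => [[[[|a] [|b]] D] p].
Qed.

Lemma in_split (u w : V) (D : seq int) : uniq D ->
  (forall d d', d \in D -> d' \in D -> (- (K%:Z) <= d - d' <= K%:Z)%R) ->
  ((u \in [seq sh d w | d <- D]) : nat) = \sum_(d <- D) (u == sh d w : nat).
Proof.
move=> uD HD.
rewrite -count_uniq_mem; last first.
  rewrite map_inj_in_uniq // => d d' Hd Hd' /eqP.
  by rewrite (sh_eq sgK tgK orb) ?HD // => /eqP.
rewrite count_map -sum1_count big_mkcond /=.
by apply: eq_bigr => d _; rewrite /= eq_sym; case: (_ == _).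
Qed.

End Sat.

Section InvDefs.
Variable K : nat.
Local Open Scope ring_scope.

Definition rng (l r : nat -> int) (a b : nat) (e : int) : bool :=
  if (a == b)%N then (- (K%:Z) <= e <= K%:Z) else (- (r a + l b + 1) <= e <= l a + r b + 1).

Definition Inv (c : nat) (cs : seq cstr) (l r : nat -> int) : Prop :=
  [/\ \sum_(i < c) (l i + r i + 1) <= K%:Z, (forall i, 0 <= l i /\ 0 <= r i) &
   forall x, x \in cs -> [/\ (ca x < c)%N, (cb x < c)%N, uniq (cD x) &
                          forall e, e \in cD x -> rng l r (ca x) (cb x) e]].

Lemma sum_two (c j : nat) (w : nat -> int) : (0 < j < c.+1)%N -> (forall i, 0 <= w i) ->
  w 0%N + w j <= \sum_(i < c.+1) w i.
Proof.
move=> /andP [j0 jc] Hw.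
rewrite big_ord_recl lerD2l.
case: j j0 jc => [//|jj] _ jc.
rewrite (bigD1 (Ordinal (jc : (jj < c)%N))) //= /bump /= add1n lerDl.
by apply: sumr_ge0 => i _; apply: Hw.
Qed.

Lemma sum_upd (c jj : nat) (w w' : nat -> int) : (jj < c)%N ->
  (forall i, i != jj -> w' i = w i.+1) -> (forall i, 0 <= w i) ->
  w' jj <= w 0%N + w jj.+1 ->
  \sum_(i < c) w' i <= \sum_(i < c.+1) w i.
Proof.
move=> jc Hw' Hw Hjj.
rewrite big_ord_recl.
rewrite [X in X <= _](bigD1 (Ordinal jc)) // [X in _ <= _ + X](bigD1 (Ordinal jc)) //=.
have bump0 : forall i, bump 0 i = i.+1 by [].
rewrite bump0.
rewrite [X in _ <= _ + (_ + X)](eq_bigr (fun i : 'I_c => w' i)); last first.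
  by move=> i Hi; rewrite Hw' // bump0.
by rewrite addrA lerD2r.
Qed.

Lemma sum_shift (c : nat) (w : nat -> int) : (forall i, 0 <= w i) ->
  \sum_(i < c) w i.+1 <= \sum_(i < c.+1) w i.
Proof.
move=> Hw; rewrite big_ord_recl.
have bump0 : forall i, bump 0 i = i.+1 by [].
by rewrite [X in _ <= _ + X](eq_bigr (fun i : 'I_c => w i.+1)) ?lerDr.
Qed.

Lemma Inv_sub c cs cs' l r : Inv c cs l r -> {subset cs' <= cs} -> Inv c cs' l r.
Proof. by move=> [H1 H2 H3] Hs; split=> // x /Hs /H3. Qed.

Definition lupd (l : nat -> int) (jj : nat) (d : int) :=
  fun i => if (i == jj)%N then Num.max (l jj.+1) (l 0%N - d) else l i.+1.
Definition rupd (r : nat -> int) (jj : nat) (d : int) :=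
  fun i => if (i == jj)%N then Num.max (r jj.+1) (r 0%N + d) else r i.+1.

Lemma Inv_subst c R l r jj d : Inv c.+1 R l r -> (jj < c)%N -> rng l r 0 jj.+1 d ->
  Inv c (map (substc jj d) R) (lupd l jj d) (rupd r jj d).
Proof.
move=> [Hsum Hnn HR] jc Hd.
have Hw : forall i, 0 <= l i + r i + 1.
  by move=> i; case: (Hnn i) => ? ?; lia.
have H2 := sum_two (j:=jj.+1) jc Hw.
move: Hd; rewrite /rng /= => Hd.
have [l0 r0] := Hnn 0%N; have [lj rj] := Hnn jj.+1.
split.
- apply: (le_trans _ Hsum).
  apply: (@sum_upd c jj (fun i => l i + r i + 1) (fun i => lupd l jj d i + rupd r jj d i + 1)) => //.
    by move=> i /negbTE Hi; rewrite /lupd /rupd Hi.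
  rewrite /lupd /rupd eqxx; lia.
- move=> i; rewrite /lupd /rupd; case: (i == jj); first lia.
  exact: Hnn.
move=> y /mapP [x xR ->].
have [xa xb xu xe] := HR x xR.
rewrite /substc /ca /cb /cD /=.
rewrite -/(ca x) -/(cb x) -/(cD x).
split.
- by rewrite /idxj; case: (ca x) xa => //= a; rewrite ltnS.
- by rewrite /idxj; case: (cb x) xb => //= a; rewrite ltnS.
- by rewrite map_inj_uniq // => e1 e2 /addIr /addIr.
move=> e' /mapP [e eD ->].
move: (xe e eD); rewrite /rng /idxj /lupd /rupd.
case: (ca x) => [|a]; case: (cb x) => [|b] /=.
- by rewrite eqxx; lia.
- move=> H.
  case: (b == jj) /eqP => [Eb|nb]; first by subst b; rewrite ?eqxx /=; lia.
  have Hf : (jj == b) = false by apply/negbTE/eqP => E; apply: nb.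
  rewrite ?Hf ?eqxx /=; lia.
- move=> H.
  case: (a == jj) /eqP => [Ea|na]; first by subst a; rewrite ?eqxx /=; lia.
  have Hf : (a == jj) = false by apply/negbTE/eqP.
  rewrite ?Hf ?eqxx /=; lia.
- case: (a == b) /eqP => [Eab|nab]; first by subst a; rewrite ?eqxx /=; lia.
  have Hf1 : (a.+1 == b.+1) = false by apply/negbTE/eqP => -[].
  have Hf2 : (a == b) = false by apply/negbTE/eqP.
  rewrite ?Hf1 ?Hf2 /=.
  case: (a == jj) /eqP => [Ea|na]; case: (b == jj) /eqP => [Eb|nb] //=; try subst a; try subst b; lia.
Qed.

Lemma Inv_shift c cs l r : Inv c.+1 cs l r ->
  (forall x, x \in cs -> ca x != 0%N /\ cb x != 0%N) ->
  Inv c (map shiftc cs) (fun i => l i.+1) (fun i => r i.+1).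
Proof.
move=> [Hsum Hnn HR] H0.
have Hw : forall i, 0 <= l i + r i + 1.
  by move=> i; case: (Hnn i) => ? ?; lia.
split.
- apply: (le_trans _ Hsum).
  exact: (@sum_shift c (fun i => l i + r i + 1)).
- by move=> i; apply: Hnn.
move=> y /mapP [x xR ->].
have [xa xb xu xe] := HR x xR.
have [na nb] := H0 x xR.
rewrite /shiftc /ca /cb /cD /=; rewrite -/(ca x) -/(cb x) -/(cD x).
move: xa xb xe na nb; rewrite /rng.
by case: (ca x) => [|a] //; case: (cb x) => [|b] //= xa xb xe _ _.
Qed.

End InvDefs.

Section Steps.
Variables (V : finType) (sg tg : V -> V) (x0 : V).
Hypothesis sgK : cancel sg tg.
Hypothesis tgK : cancel tg sg.
Variable K : nat.
Hypothesis orb : forall v t, 0 < t <= K -> iter t sg v != v.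

Local Notation sat := (sat sg tg x0).
Local Notation sat1 := (sat1 sg tg x0).
Local Notation sh := (sh sg tg).

Lemma sat_rem s x cs : x \in cs -> sat s cs = sat1 s x && sat s (rem x cs).
Proof. by move=> xin; rewrite /sat (perm_all _ (perm_to_rem xin)). Qed.

Lemma step_const c cs cs' b :
  (forall s, sat s cs = b && sat s cs') ->
  Sc c (fun s => sat s cs : nat) = if b then Sc c (fun s => sat s cs' : nat) else 0.
Proof.
move=> H; case: b H => H.
  by apply: Sc_ext => s; rewrite H.
by rewrite (Sc_ext c (h := fun _ => 0)) ?Sc0 // => s; rewrite H.
Qed.

Lemma step_in c jj D R cs :
  uniq D -> (forall d d', d \in D -> d' \in D -> (- (K%:Z) <= d - d' <= K%:Z)%R) ->
  (forall s, sat s cs = sat1 s (0, jj.+1, D, true) && sat s R) ->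
  Sc c.+1 (fun s => sat s cs : nat) =
  \sum_(d <- D) Sc c (fun s => sat s (map (substc jj d) R) : nat).
Proof.
move=> uD HD H.
have E : forall s, (sat s cs : nat) =
    \sum_(d <- D) (sat s R && (head x0 s == sh d (nth x0 s jj.+1)) : nat).
  move=> s; rewrite H /sat1 /ca /cb /cD /cp /= eqb_id.
  rewrite -mulnb (in_split sgK tgK orb) // big_distrl /=.
  by apply: eq_bigr => d _; rewrite mulnb andbC nth0.
rewrite (Sc_ext _ E) Sc_sum; apply: eq_bigr => d _.
rewrite (Sc_elim _ _ (fun v => sh d v)).
apply: Sc_ext => s.
by rewrite /sat all_map; congr (nat_of_bool _); apply: eq_all => x /=; rewrite sat1_subst.
Qed.

Lemma step_notin c jj e D2 R :
  Sc c.+1 (fun s => sat s ((0, jj.+1, D2, false) :: R) : nat) =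
  Sc c.+1 (fun s => sat s ((0, jj.+1, e :: D2, false) :: R) : nat) +
  Sc c (fun s => sat s (map (substc jj e) ((0, jj.+1, D2, false) :: R)) : nat).
Proof.
have E2 : Sc c (fun s => sat s (map (substc jj e) ((0, jj.+1, D2, false) :: R)) : nat) =
   Sc c.+1 (fun s => sat s ((0, jj.+1, D2, false) :: R) && (head x0 s == sh e (nth x0 s jj.+1)) : nat).
  rewrite (Sc_elim _ _ (fun v => sh e v)).
  apply: Sc_ext => s; rewrite /sat all_map; congr (nat_of_bool _).
  by apply: eq_all => x /=; rewrite sat1_subst.
rewrite E2 -Sc_add; apply: Sc_ext => s.
rewrite /sat /= /sat1 /ca /cb /cD /cp /= -nth0 in_cons.
by case: (nth x0 s 0 == _); case: (_ \in _); case: (all _ _).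
Qed.

Lemma step_free c cs :
  (forall x, x \in cs -> ca x != 0 /\ cb x != 0) ->
  Sc c.+1 (fun s => sat s cs : nat) = #|V| * Sc c (fun s => sat s (map shiftc cs) : nat).
Proof.
move=> H0 /=; rewrite -sum_nat_const; apply: eq_bigr => v _.
apply: Sc_ext => s; rewrite /sat all_map; congr (nat_of_bool _).
apply: eq_in_all => x xin /=; have [a b] := H0 x xin; exact: sat1_shift.
Qed.

End Steps.

Lemma meas_rem x cs : x \in cs -> meas cs = (size (cD x)).+1 + meas (rem x cs).
Proof.
move=> xin; rewrite /meas (perm_sumn (perm_map _ (perm_to_rem xin))) //.
Qed.

Lemma norm0 K c cs l r x : Inv K c.+1 cs l r -> x \in cs -> ca x != cb x ->
  (ca x == 0) || (cb x == 0) ->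
  exists jj D p, [/\ (jj < c)%N, uniq D, (forall e, e \in D -> rng K l r 0 jj.+1 e),
    size D = size (cD x) &
    forall (V : finType) (sg tg : V -> V) (x0 : V), cancel sg tg -> cancel tg sg ->
      forall s, sat1 sg tg x0 s x = sat1 sg tg x0 s (0%N, jj.+1, D, p)].
Proof.
move=> [_ _ HR] xin nab H0.
have [xa xb xu xe] := HR x xin.
move: xa xb xu xe nab H0; case: x {xin} => [[[a b] D] p].
rewrite /ca /cb /cD /=.
case: a => [|a]; case: b => [|b] //= xa xb xu xe _ _.
  by exists b, D, p; split.
exists a, (map (fun e => - e)%R D), p; split => //.
- by rewrite map_inj_uniq //; apply: oppr_inj.
- move=> e /mapP [e' He' ->]; move: (xe e' He'); rewrite /rng /=; lia.
- by rewrite size_map.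
move=> V sg tg x0 sgK tgK s.
by rewrite -(sat1_flip x0 sgK tgK).
Qed.

Section Core.
Variables (V1 V2 : finType) (s1 t1 : V1 -> V1) (s2 t2 : V2 -> V2) (y1 : V1) (y2 : V2).
Hypotheses (s1K : cancel s1 t1) (t1K : cancel t1 s1).
Hypotheses (s2K : cancel s2 t2) (t2K : cancel t2 s2).
Hypothesis cardV : #|V1| = #|V2|.
Variable K : nat.
Hypothesis orb1 : forall v t, 0 < t <= K -> iter t s1 v != v.
Hypothesis orb2 : forall v t, 0 < t <= K -> iter t s2 v != v.

Lemma core c : forall cs l r, Inv K c cs l r ->
  Sc c (fun s => sat s1 t1 y1 s cs : nat) = Sc c (fun s => sat s2 t2 y2 s cs : nat).
Proof.
elim: c => [|c IHc] cs l r HI.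
  case: HI => _ _ HR; case: cs HR => [|x cs] HR //.
  by have [] := HR x (mem_head _ _).
have [N HN] := ubnP (meas cs); elim: N cs HI HN => [//|N IHN] cs HI HN.
have [Hsum Hnn HR] := HI.
case: (boolP (has (fun x => ca x == cb x) cs)) => [/hasP [x xin /eqP Exx] | Hns].
  have [xa xb xu xe] := HR x xin.
  have Hxe : forall e, e \in cD x -> (- (K%:Z) <= e <= K%:Z)%R.
    by move=> e /xe; rewrite /rng Exx eqxx.
  rewrite (@step_const _ s1 t1 y1 _ _ (rem x cs) ((0%R \in cD x) == cp x)); last first.
    by move=> s; rewrite (sat_rem _ _ _ _ xin) (sat1_self y1 t1K orb1).
  rewrite (@step_const _ s2 t2 y2 _ _ (rem x cs) ((0%R \in cD x) == cp x)); last first.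
    by move=> s; rewrite (sat_rem _ _ _ _ xin) (sat1_self y2 t2K orb2).
  case: ifP => // _; apply: IHN.
    by apply: (Inv_sub HI) => y /mem_rem.
  by move: HN; rewrite (meas_rem xin); lia.
case: (boolP (has (fun x => (ca x == 0) || (cb x == 0)) cs)) => [/hasP [x xin H0] | Hn0].
  have nab : ca x != cb x.
    by apply/negP => E; move/hasPn: Hns => /(_ x xin); rewrite E.
  have [jj [D [p [jc uD HD sD Hsat]]]] := norm0 HI xin nab H0.
  set R := rem x cs.
  have Hcs : forall (V : finType) (sg tg : V -> V) (x0 : V), cancel sg tg -> cancel tg sg ->
      forall s, sat sg tg x0 s cs = sat1 sg tg x0 s (0%N, jj.+1, D, p) && sat sg tg x0 s R.
    by move=> V sg tg x0 sgK tgK s; rewrite (sat_rem _ _ _ _ xin) (Hsat _ _ _ _ sgK tgK).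
  have HIR : Inv K c.+1 R l r by apply: (Inv_sub HI) => y /mem_rem.
  have Hw : forall i, (0 <= l i + r i + 1)%R by move=> i; case: (Hnn i) => ? ?; lia.
  have H2 := sum_two (j:=jj.+1) jc Hw.
  have Hdiff : forall d d', d \in D -> d' \in D -> (- (K%:Z) <= d - d' <= K%:Z)%R.
    move=> d d' /HD hd /HD hd'; move: hd hd'; rewrite /rng /=.
    have := Hnn 0%N; have := Hnn jj.+1; lia.
  have HmR : meas R < N.
    by move: HN; rewrite /R (meas_rem xin); lia.
  case: p Hcs {Hsat} => Hcs.
    rewrite (step_in s1K t1K orb1 c uD Hdiff (Hcs _ _ _ _ s1K t1K)).
    rewrite (step_in s2K t2K orb2 c uD Hdiff (Hcs _ _ _ _ s2K t2K)).
    apply: eq_big_seq => d dD; apply: IHc.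
    exact: (Inv_subst HIR jc (HD d dD)).
  case: D uD HD sD Hdiff Hcs => [|e D2] uD HD sD Hdiff Hcs.
    rewrite (@step_const _ s1 t1 y1 _ _ R true); last by move=> s; rewrite Hcs.
    rewrite (@step_const _ s2 t2 y2 _ _ R true); last by move=> s; rewrite Hcs.
    exact: IHN.
  set cs2 := (0%N, jj.+1, D2, false) :: R.
  set cs' := (0%N, jj.+1, e :: D2, false) :: R.
  have HI2 : Inv K c.+1 cs2 l r.
    split => // y; rewrite inE => /orP [/eqP ->|]; last by case: HIR => _ _; apply.
    split => //; first by move: uD => /andP [].
    by move=> e' He'; apply: HD; rewrite inE He' orbT.
  have E1 := step_notin y1 s1K t1K c jj e D2 R.
  have E2 := step_notin y2 s2K t2K c jj e D2 R.
  have F1 : Sc c.+1 (fun s => sat s1 t1 y1 s cs : nat) = Sc c.+1 (fun s => sat s1 t1 y1 s cs' : nat).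
    by apply: Sc_ext => s; rewrite Hcs.
  have F2 : Sc c.+1 (fun s => sat s2 t2 y2 s cs : nat) = Sc c.+1 (fun s => sat s2 t2 y2 s cs' : nat).
    by apply: Sc_ext => s; rewrite Hcs.
  have G : Sc c (fun s => sat s1 t1 y1 s (map (substc jj e) cs2) : nat) =
           Sc c (fun s => sat s2 t2 y2 s (map (substc jj e) cs2) : nat).
    apply: IHc; apply: (Inv_subst HI2 jc); apply: HD; exact: mem_head.
  have H2' : Sc c.+1 (fun s => sat s1 t1 y1 s cs2 : nat) = Sc c.+1 (fun s => sat s2 t2 y2 s cs2 : nat).
    apply: IHN => //.
    move: HN; rewrite /cs2 /R (meas_rem xin) -sD /meas /cD /=; lia.
  rewrite F1 F2; apply/eqP; rewrite -(eqn_add2r (Sc c (fun s => sat s1 t1 y1 s (map (substc jj e) cs2) : nat))).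
  by rewrite -E1 G -E2 H2'.
have H0 : forall x, x \in cs -> ca x != 0 /\ cb x != 0.
  move=> x xin; move/hasPn: Hn0 => /(_ x xin); rewrite negb_or => /andP [a b]; done.
rewrite (step_free _ _ _ _ H0) (step_free _ _ _ _ H0) cardV; congr (_ * _).
apply: IHc; exact: Inv_shift HI H0.
Qed.

End Core.

Lemma Sc_tuple (V : finType) c (g : seq V -> nat) : Sc c g = \sum_(t : c.-tuple V) g t.
Proof.
elim: c g => [|c IH] g /=.
  rewrite (eq_bigr (fun _ => g [::])); last by move=> t _; rewrite tuple0.
  by rewrite sum_nat_const card_tuple expn0 mul1n.
under eq_bigr => v _ do rewrite IH.
rewrite pair_bigA /=.
rewrite (reindex (fun p : V * c.-tuple V => [tuple of p.1 :: p.2])) //=.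
exists (fun t : c.+1.-tuple V => (thead t, [tuple of behead t])).
  by move=> [v t] _ /=; congr (_, _); apply: val_inj.
by move=> t _; rewrite [in RHS](tuple_eta t); apply: val_inj.
Qed.

Section Sem.
Variables (V : finType) (sg tg : V -> V) (x0 : V).
Hypothesis sgK : cancel sg tg.
Hypothesis tgK : cancel tg sg.
Hypothesis h1 : forall a, sg a != a.
Variable eG : rel V.
Hypothesis hG : forall a b, eG a b = (b == sg a) || (a == sg b).

Definition Dof (p : bool) : seq int := if p then [:: 1%R; (-1)%R] else [:: (-1)%R; 0%R; 1%R].

Lemma sem1 a b (p : bool) :
  ((a \in [seq sh sg tg d b | d <- Dof p]) == p) = (eG a b == p) && (a != b).
Proof.
have E1 : sh sg tg 1 b = sg b by [].
have E2 : sh sg tg (-1) b = tg b by [].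
have E0 : sh sg tg 0 b = b by [].
have h2 : tg b != b.
  by apply/eqP => E; move: (h1 b); rewrite -{1}E tgK eqxx.
have Hs : (b == sg a) = (a == tg b).
  by rewrite eq_sym (can2_eq sgK tgK).
case: p; rewrite /Dof /= !inE ?E1 ?E2 ?E0 hG Hs.
  case: (a =P b) => [->|nab]; rewrite ?andbF /=.
    by rewrite [b == sg b]eq_sym [b == tg b]eq_sym (negbTE (h1 b)) (negbTE h2).
  by rewrite andbT orbC.
case: (a =P b) => [->|nab]; rewrite ?andbF /=; first by rewrite orbT.
by rewrite andbT.
Qed.

End Sem.

Section Emb.
Variables (W : finType) (eL : rel W).

Definition mkc (p : 'I_#|W| * 'I_#|W|) : cstr :=
  (nat_of_ord p.1, nat_of_ord p.2, Dof (eL (enum_val p.1) (enum_val p.2)),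
   eL (enum_val p.1) (enum_val p.2)).

Definition cs0 : seq cstr :=
  [seq mkc p | p <- [seq (i, j) | i <- enum 'I_#|W|, j <- enum 'I_#|W|] & p.1 != p.2].

Definition Pemb (V : finType) (eG : rel V) (f : {ffun W -> V}) : bool :=
  injectiveb f && [forall u, forall v, eG (f u) (f v) == eL u v].

Definition Emb (V : finType) (eG : rel V) : nat := \sum_(f : {ffun W -> V}) (Pemb eG f : nat).

Lemma emb_sc (V : finType) (sg tg : V -> V) (x0 : V) (eG : rel V) :
  cancel sg tg -> cancel tg sg -> (forall a, sg a != a) -> irreflexive eL -> irreflexive eG ->
  (forall a b, eG a b = (b == sg a) || (a == sg b)) ->
  Emb eG = Sc #|W| (fun s => sat sg tg x0 s cs0 : nat).
Proof.
move=> sgK tgK h1 irrL irrG hG.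
rewrite Sc_tuple /Emb (reindex (@fgraph W V)) /=; last first.
  by exists (@Finfun W V) => f _; [rewrite fgraphK | rewrite FinfunK].
apply: eq_bigr => f _; congr (nat_of_bool _).
have Hnth : forall i : 'I_#|W|, nth x0 (fgraph f) i = f (enum_val i).
  by move=> i; rewrite -tnth_nth tnth_fgraph.
rewrite /sat /cs0 all_map all_filter.
apply/idP/all_allpairsP.
  move=> /andP [/injectiveP finj /forallP Hf] i j _ _ /=; apply/implyP => nij.
  rewrite /sat1 /mkc /ca /cb /cD /cp /= !Hnth (sem1 sgK tgK h1 hG).
  have Hf2 := forallP (Hf (enum_val i)) (enum_val j).
  rewrite Hf2 /=; apply/negP => /eqP /finj /enum_val_inj E.
  by rewrite E eqxx in nij.
move=> H.
have H' : forall u v, u != v ->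
    (eG (f u) (f v) == eL u v) && (f u != f v).
  move=> u v nuv.
  have := H (enum_rank u) (enum_rank v) (mem_enum _ _) (mem_enum _ _).
  rewrite /= /sat1 /mkc /ca /cb /cD /cp /= !Hnth !enum_rankK (sem1 sgK tgK h1 hG).
  by move=> /implyP; apply; rewrite (inj_eq enum_rank_inj).
apply/andP; split.
  apply/injectiveP => u v E; apply/eqP; apply/negPn/negP => nuv.
  by move: (H' u v nuv); rewrite E eqxx andbF.
apply/forallP => u; apply/forallP => v.
case: (u =P v) => [->|nuv]; first by rewrite irrL irrG.
by case/andP: (H' u v (introN eqP nuv)).
Qed.

End Emb.

Lemma sum_card (T : finType) (P : pred T) : \sum_(i : T) (P i : nat) = #|[set i | P i]|.
Proof.
rewrite -sum1_card [RHS]big_mkcond /=; apply: eq_bigr => i _; rewrite inE.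
by case: (P i).
Qed.

Lemma card_le_inj (T T' : finType) (A : {set T}) (B : {set T'}) (h : T -> T') :
  {in A &, injective h} -> (forall x, x \in A -> h x \in B) -> #|A| <= #|B|.
Proof.
move=> hi hAB; rewrite -(card_in_imset hi); apply: subset_leq_card.
by apply/subsetP => y /imsetP [x xA ->]; apply: hAB.
Qed.

Section Iso.
Variables (W V : finType) (eL : rel W) (eG : rel V).

Lemma count_X (X : {set V}) (f0 : {ffun W -> V}) :
  Pemb eL eG f0 -> f0 @: [set: W] = X ->
  #|[set f | Pemb eL eG f && (f @: [set: W] == X)]| = #|[set g | Pemb eL eL g]|.
Proof.
move=> /andP [/injectiveP f0i /forallP Hf0] Ef0.
have Hf0' : forall u v, eG (f0 u) (f0 v) = eL u v.
  by move=> u v; apply/eqP; apply: (forallP (Hf0 u)).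
apply/eqP; rewrite eqn_leq; apply/andP; split.
  pose psi (f : {ffun W -> V}) : {ffun W -> W} := [ffun u => odflt u [pick w | f0 w == f u]].
  have key : forall f : {ffun W -> V}, f @: [set: W] = X -> forall u, f0 (psi f u) = f u.
    move=> f Ef u; rewrite /psi ffunE.
    case: pickP => [w /eqP //|H].
    have : f u \in X by rewrite -Ef; apply: imset_f.
    rewrite -Ef0 => /imsetP [w _ Ew].
    by move: (H w); rewrite Ew eqxx.
  apply: (card_le_inj (h := psi)).
    move=> f f'; rewrite !inE => /andP [_ /eqP Ef] /andP [_ /eqP Ef'] E.
    apply/ffunP => u; by rewrite -(key _ Ef) E key.
  move=> f; rewrite !inE => /andP [/andP [/injectiveP fi /forallP Hf] /eqP Ef].
  apply/andP; split.
    apply/injectiveP => u v E; apply: fi; by rewrite -(key _ Ef) E key.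
  apply/forallP => u; apply/forallP => v.
  by rewrite -Hf0' !key //; apply: (forallP (Hf u)).
pose phi (g : {ffun W -> W}) : {ffun W -> V} := [ffun w => f0 (g w)].
apply: (card_le_inj (h := phi)).
  move=> g g' _ _ E; apply/ffunP => u; apply: f0i.
  by move: (congr1 (fun h : {ffun W -> V} => h u) E); rewrite !ffunE.
move=> g; rewrite !inE => /andP [/injectiveP gi /forallP Hg].
rewrite /Pemb -andbA; apply/and3P; split.
- apply/injectiveP => u v; rewrite !ffunE => /f0i; exact: gi.
- apply/forallP => u; apply/forallP => v; rewrite !ffunE Hf0'.
  exact: (forallP (Hg u)).
rewrite -Ef0 eqEcard; apply/andP; split.
  apply/subsetP => y /imsetP [w _ ->]; rewrite ffunE; exact: imset_f.
rewrite !card_imset //.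
by move=> u v; rewrite !ffunE => /f0i; exact: gi.
Qed.

End Iso.

Lemma emb_s (W V : finType) (eL : rel W) (eG : rel V) :
  Emb eL eG = s_count eG eL * Emb eL eL.
Proof.
have E1 : forall f : {ffun W -> V}, (Pemb eL eG f : nat) =
    \sum_(X : {set V}) (Pemb eL eG f && (f @: [set: W] == X) : nat).
  move=> f; rewrite (bigD1 (f @: [set: W])) //= eqxx andbT big1 ?addn0 //.
  by move=> X /negbTE nX; rewrite eq_sym nX andbF.
rewrite /Emb (eq_bigr _ (fun f _ => E1 f)) exchange_big /=.
rewrite /s_count -sum_card big_distrl /=.
apply: eq_bigr => X _; rewrite sum_card sum_card.
case: (boolP (induced_iso eG X eL)) => [/existsP [f0 /and3P [f0i /eqP Ef0 Hf0]] | niso].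
  by rewrite mul1n; apply: (count_X (f0 := f0)) => //; rewrite /Pemb f0i Hf0.
rewrite [_ * _]mul0n; apply/eqP; rewrite cards_eq0; apply/eqP/setP => f; rewrite !inE.
apply/negbTE/negP => /andP [/andP [fi Hf] Ef]; move/negP: niso; apply.
by apply/existsP; exists f; apply/and3P.
Qed.

Section Cyc.
Variables (V : finType) (e : rel V) (K : nat).
Hypothesis esymm : symmetric e.
Variables (M : V -> nat) (G : V -> nat -> V).
Hypothesis HF : forall x, [/\ (3 <= M x) && (K.+1 <= M x),
   (forall i j, i < M x -> j < M x -> G x i = G x j -> i = j),
   (forall i, i < M x -> connect e x (G x i)),
   (forall v, connect e x v -> exists2 i, i < M x & G x i = v) &
   (forall i j, i < M x -> j < M x ->
      e (G x i) (G x j) = (j == i.+1 %% M x) || (i == j.+1 %% M x))].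

Let csym : connect_sym e := sym_connect_sym esymm.
Local Notation rt := (fingraph.root e).

Definition mm v := M (rt v).
Definition gg v := G (rt v).
Definition idx v := odflt 0 (omap val [pick i : 'I_(mm v) | gg v i == v]).

Lemma conn_rt v : connect e (rt v) v.
Proof. by rewrite csym connect_root. Qed.

Lemma idxP v : idx v < mm v /\ gg v (idx v) = v.
Proof.
rewrite /idx; case: pickP => [i /eqP Ei|H] /=; first by split.
have [_ _ _ Hs _] := HF (rt v).
have [i Hi Ei] := Hs v (conn_rt v).
by move: (H (Ordinal Hi)); rewrite /gg Ei eqxx.
Qed.

Lemma mpos v : 0 < mm v.
Proof. by have [/andP [H3 _] _ _ _ _] := HF (rt v); rewrite /mm; apply: leq_trans H3. Qed.

Definition sg v := gg v ((idx v).+1 %% mm v).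

Lemma sg_conn v : connect e v (sg v).
Proof.
have [_ _ Hc _ _] := HF (rt v).
apply: connect_trans (connect_root _ _) _.
by apply: Hc; rewrite ltn_pmod // mpos.
Qed.

Lemma rt_eq v w : connect e v w -> rt v = rt w.
Proof. by move/(fingraph.rootP csym). Qed.

Lemma gg_inj v i j : i < mm v -> j < mm v -> gg v i = gg v j -> i = j.
Proof. have [_ Hi _ _ _] := HF (rt v); exact: Hi. Qed.

Lemma idx_eq v w : rt v = rt w -> (w == sg v) = (idx w == (idx v).+1 %% mm v).
Proof.
move=> E.
have [iw Ew] := idxP w; have [iv Ev] := idxP v.
have Hm : mm w = mm v by rewrite /mm E.
have Hg : gg w = gg v by rewrite /gg E.
rewrite Hm Hg in iw Ew.
apply/eqP/eqP => [Hw|Hi].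
  apply: (gg_inj iw); first by rewrite ltn_pmod // mpos.
  by rewrite Ew Hw.
by rewrite /sg -Ew Hi.
Qed.

Lemma hG u w : e u w = (w == sg u) || (u == sg w).
Proof.
case: (boolP (connect e u w)) => Hc.
  have Er := rt_eq Hc.
  rewrite (idx_eq Er) (idx_eq (esym Er)).
  have [iu Eu] := idxP u; have [iw Ew] := idxP w.
  have Hm : mm w = mm u by rewrite /mm Er.
  have Hg : gg w = gg u by rewrite /gg Er.
  rewrite Hm Hg in iw Ew.
  have [_ _ _ _ He] := HF (rt u).
  by rewrite -{1}Eu -{1}Ew He // Hm.
have -> : e u w = false by apply/negbTE/negP => /connect1; apply/negP.
case: (w =P sg u) => [E|_] /=.
  by move: Hc; rewrite E sg_conn.
apply/esym/negbTE/negP => /eqP E.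
by move: Hc; rewrite csym E sg_conn.
Qed.

Lemma rt_sg v : rt (sg v) = rt v.
Proof. by rewrite (rt_eq (sg_conn v)). Qed.

Lemma mod_succ_inj m i j : i < m -> j < m -> i.+1 %% m = j.+1 %% m -> i = j.
Proof.
move=> im jm E.
have : (i + 1 == j + 1 %[mod m]) by rewrite !addn1 E.
by rewrite eqn_modDr !modn_small // => /eqP.
Qed.

Lemma sg_inj : injective sg.
Proof.
move=> u w E.
have Er : rt u = rt w by rewrite -rt_sg E rt_sg.
have [iu Eu] := idxP u; have [iw Ew] := idxP w.
have Hm : mm w = mm u by rewrite /mm Er.
have Hg : gg w = gg u by rewrite /gg Er.
rewrite Hm Hg in iw Ew.
move: E; rewrite /sg Hm Hg => /(gg_inj (ltn_pmod _ (mpos u)) (ltn_pmod _ (mpos u))).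
by move/(mod_succ_inj iu iw) => Ei; rewrite -Eu -Ew Ei.
Qed.

Lemma iter_sg v t : rt (iter t sg v) = rt v /\ idx (iter t sg v) = (idx v + t) %% mm v.
Proof.
elim: t => [|t [IH1 IH2]] /=.
  by rewrite addn0 modn_small //; case: (idxP v).
rewrite rt_sg IH1; split=> //.
have := idx_eq (esym (rt_sg (iter t sg v))); rewrite eqxx => /esym /eqP ->.
by rewrite IH2 /mm IH1 -/(mm v) -addn1 modnDml -addnA addn1.
Qed.

Lemma orbit_big v t : 0 < t < mm v -> iter t sg v != v.
Proof.
move=> /andP [t0 tm]; apply/eqP => E.
have [_ H2] := iter_sg v t; rewrite E in H2.
have [iv _] := idxP v.
have : (idx v + t == idx v + 0 %[mod mm v]) by rewrite -H2 addn0 modn_small.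
rewrite eqn_modDl mod0n modn_small //.
by move/eqP => t00; rewrite t00 in t0.
Qed.

End Cyc.

Lemma cyc_perm (V : finType) (e : rel V) (K : nat) :
  simple_graph e -> cycle_components_atleast e K.+1 ->
  exists sg tg : V -> V, [/\ cancel sg tg, cancel tg sg, (forall a, sg a != a),
    (forall a b, e a b = (b == sg a) || (a == sg b)) &
    (forall v t, 0 < t <= K -> iter t sg v != v)].
Proof.
move=> [esymm eirr] Hc.
have HF0 : forall x, exists p : nat * (nat -> V), [/\ (3 <= p.1) && (K.+1 <= p.1),
   (forall i j, i < p.1 -> j < p.1 -> p.2 i = p.2 j -> i = j),
   (forall i, i < p.1 -> connect e x (p.2 i)),
   (forall v, connect e x v -> exists2 i, i < p.1 & p.2 i = v) &
   (forall i j, i < p.1 -> j < p.1 ->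
      e (p.2 i) (p.2 j) = (j == i.+1 %% p.1) || (i == j.+1 %% p.1))].
  move=> x; have [m [f [H3 [HK [finj [Ef Hed]]]]]] := Hc x.
  pose g i := odflt x (omap f (insub i)).
  have gE : forall o : 'I_m, g o = f o by move=> o; rewrite /g valK.
  exists (m, g); split => /=.
  - by rewrite H3 HK.
  - move=> i j im jm.
    rewrite -[i]/(nat_of_ord (Ordinal im)) -[j]/(nat_of_ord (Ordinal jm)) !gE.
    by move/finj => ->.
  - move=> i im; rewrite -[i]/(nat_of_ord (Ordinal im)) gE.
    have : f (Ordinal im) \in component e x by rewrite -Ef imset_f.
    by rewrite inE.
  - move=> v Hv; have : v \in f @: [set: 'I_m] by rewrite Ef inE.
    by case/imsetP => o _ ->; exists o => //; rewrite gE.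
  - move=> i j im jm.
    rewrite -[i]/(nat_of_ord (Ordinal im)) -[j]/(nat_of_ord (Ordinal jm)) !gE.
    exact: Hed.
have [F HF] := fin_all_exists HF0.
pose M x := (F x).1; pose G x := (F x).2.
have HF' : forall x, [/\ (3 <= M x) && (K.+1 <= M x),
   (forall i j, i < M x -> j < M x -> G x i = G x j -> i = j),
   (forall i, i < M x -> connect e x (G x i)),
   (forall v, connect e x v -> exists2 i, i < M x & G x i = v) &
   (forall i j, i < M x -> j < M x ->
      e (G x i) (G x j) = (j == i.+1 %% M x) || (i == j.+1 %% M x))].
  exact: HF.
have inj := sg_inj esymm HF'.
exists (sg e M G), (invF inj); split.
- exact: invF_f.
- exact: f_invF.
- move=> a; rewrite -[sg e M G a]/(iter 1 (sg e M G) a); apply: (orbit_big esymm HF').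
  have [/andP [H3 _] _ _ _ _] := HF' (fingraph.root e a).
  by rewrite /mm; apply: leq_trans H3.
- exact: (hG esymm HF').
move=> v t /andP [t0 tK]; apply: (orbit_big esymm HF'); rewrite t0 /=.
have [/andP [_ HK] _ _ _ _] := HF' (fingraph.root e v).
by rewrite /mm; apply: leq_trans HK.
Qed.

Lemma Inv_cs0 (W : finType) (eL : rel W) :
  Inv #|W| #|W| (cs0 eL) (fun _ => 0%R) (fun _ => 0%R).
Proof.
split.
- rewrite (eq_bigr (fun _ => 1%R)); last by move=> i _; rewrite !add0r.
  by rewrite sumr_const card_ord natz.
- by move=> i; split.
move=> x /mapP [[i j]]; rewrite mem_filter /= => /andP [nij _] ->.
rewrite /mkc /ca /cb /cD /=; split => //.
  by case: (eL _ _).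
move=> e He; rewrite /rng.
have -> : (nat_of_ord i == nat_of_ord j) = false by apply/negbTE.
move: He; case: (eL _ _); rewrite /Dof !inE.
  by case/orP => /eqP ->.
by case/or3P => /eqP ->.
Qed.

Theorem theorem3p3 (W : finType) (eL : rel W) (k n : nat)
    (V V' : finType) (eG : rel V) (eG' : rel V') :
  simple_graph eL -> linear_forest eL -> #|W| = k ->
  0 < n ->
  simple_graph eG -> #|V| = n -> cycle_components_atleast eG k.+1 ->
  simple_graph eG' -> #|V'| = n -> cycle_components_atleast eG' k.+1 ->
  s_count eG eL = s_count eG' eL.
Proof.
move=> [Lsym Lirr] _ Wk n0 HG Vn HcG HG' V'n HcG'.
have [sg [tg [sgK tgK h1 hG orb]]] := cyc_perm HG HcG.
have [sg' [tg' [sgK' tgK' h1' hG' orb']]] := cyc_perm HG' HcG'.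
have /card_gt0P [x0 _] : 0 < #|V| by rewrite Vn.
have /card_gt0P [x0' _] : 0 < #|V'| by rewrite V'n.
have Apos : 0 < Emb eL eL.
  rewrite /Emb (bigD1 [ffun u => u]) //= ltn_addr //.
  have -> : Pemb eL eL [ffun u => u] = true.
    apply/andP; split.
      by apply/injectiveP => u v; rewrite !ffunE.
    by apply/forallP => u; apply/forallP => v; rewrite !ffunE.
  by [].
apply/eqP; rewrite -(eqn_pmul2r Apos) -!emb_s.
rewrite (emb_sc x0 sgK tgK h1 Lirr HG.2 hG) (emb_sc x0' sgK' tgK' h1' Lirr HG'.2 hG').
have HI : Inv k #|W| (cs0 eL) (fun _ => 0%R) (fun _ => 0%R) by rewrite -{1}Wk; exact: Inv_cs0.
have cV : #|V| = #|V'| by rewrite Vn V'n.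
by rewrite (core x0 x0' sgK tgK sgK' tgK' cV orb orb' HI).
Qed.
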